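(* Let $m,k\in\mathbb{N}$ and let $\gamma\in\mathbb{C}$ with $\gamma,\ -2m-\gamma\notin\mathbb{Z}_0^-$. Then \[ {}_3F_2\left[\begin{array}{r} -2m-1,\ 1+k,\ \gamma;\\ -2m-1-k,\ -2m-\gamma;\end{array}1\right]_{2m+1}=0. \]
   Context: $\mathbb{N}=\{1,2,3,\dots\}$, $\mathbb{Z}_0^-=\{0,-1,-2,\dots\}$. For $a\in\mathbb{C}$ and $n\in\mathbb{N}_0$, $(a)_0=1$ and $(a)_n=a(a+1)\cdots(a+n-1)$. For $N\in\mathbb{N}_0$, ${}_3F_2\left[\begin{array}{r} a_1,a_2,a_3;\\ b_1,b_2;\end{array}z\right]_N=\sum_{n=0}^{N}\frac{(a_1)_n(a_2)_n(a_3)_n}{(b_1)_n(b_2)_n}\frac{z^n}{n!}$ (the sum of the first $N+1$ terms), defined whenever $(b_1)_n(b_2)_n\neq0$ for $0\le n\le N$. *)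

(* Defs.v *)
From HB Require Import structures.
From mathcomp Require Import all_boot all_order all_algebra.
From mathcomp Require Import reals complex.
Set Implicit Arguments. Unset Strict Implicit. Unset Printing Implicit Defensive.
Import Order.TTheory GRing.Theory Num.Theory.
Local Open Scope ring_scope.

Definition poch (F : fieldType) (a : F) (n : nat) : F :=
  \prod_(i < n) (a + i%:R).

Definition F32_trunc (F : fieldType) (a1 a2 a3 b1 b2 z : F) (N : nat) : F :=
  \sum_(n < N.+1)
     (poch a1 n * poch a2 n * poch a3 n) / (poch b1 n * poch b2 n)
       * (z ^+ n / (n`!)%:R).

(* Main.v *)
Require Import Defs.
From HB Require Import structures.
From mathcomp Require Import all_boot all_order all_algebra.
From mathcomp Require Import reals complex.
From mathcomp Require Import ring.
Import Order.TTheory GRing.Theory Num.Theory.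
Local Open Scope ring_scope.
Section P.
Variable F : fieldType.
Lemma pochS (a : F) n : poch a n.+1 = poch a n * (a + n%:R).
Proof. by rewrite /poch big_ord_recr. Qed.
Lemma pochSl (a : F) n : poch a n.+1 = a * poch (a+1) n.
Proof.
rewrite /poch big_ord_recl addr0; congr (_ * _); apply eq_bigr => i _.
by rewrite lift0 -natr1 addrAC addrA.
Qed.
Lemma pochN (x : F) n : poch (-x) n = (-1)^+n * poch (x - n%:R + 1) n.
Proof.
elim: n => [|n IH]; first by rewrite /poch !big_ord0 expr0 mulr1.
have E : x - n.+1%:R + 1 = x - n%:R by rewrite -natr1; ring.
rewrite pochS IH pochSl E exprS; ring.
Qed.
Lemma pochD (a : F) n p : poch a (n + p) = poch a n * poch (a + n%:R) p.
Proof.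
by rewrite /poch big_split_ord; congr (_*_); apply eq_bigr => i _; rewrite natrD addrA.
Qed.
Lemma pochnat p n : poch (p.+1)%:R n * (p`!)%:R = ((p+n)`!)%:R :> F.
Proof.
elim: n => [|n IH]; first by rewrite /poch big_ord0 mul1r addn0.
rewrite pochS mulrAC IH addnS factS natrM mulrC -natrD addSn //.
Qed.
End P.



Section D.
Variable F : numFieldType.
Variable N : nat.
Variables b c : F.
Hypothesis hb : poch b N != 0.
Hypothesis hc : poch c N != 0.
Definition s n := (-1)^+n * ((N`!)%:R / ((n`!)%:R * ((N-n)`!)%:R) * (poch b n * poch b (N-n)) * (poch c n * poch c (N-n)) / (poch b N * poch c N)).

Lemma refl_poch (x : F) n : (n <= N)%N -> poch (1 - N%:R - x) n = (-1)^+n * poch (x + (N-n)%:R) n.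
Proof.
move=> hn. have -> : 1 - N%:R - x = - (x + N%:R - 1) by ring.
rewrite pochN natrB //; congr (_ * poch _ _); ring.
Qed.

Lemma term n : (n <= N)%N ->
  poch (- N%:R) n * poch b n * poch c n / (poch (1 - N%:R - b) n * poch (1 - N%:R - c) n) * (1 ^+ n / (n`!)%:R) = s n.
Proof.
move=> hn.
have Eb : poch b N = poch b (N-n) * poch (b + (N-n)%:R) n by rewrite -pochD subnK.
have Ec : poch c N = poch c (N-n) * poch (c + (N-n)%:R) n by rewrite -pochD subnK.
have hA : poch (- N%:R) n * ((N-n)`!)%:R = (-1)^+n * (N`!)%:R :> F.
  rewrite pochN -mulrA; congr (_ * _).
  have -> : N%:R - n%:R + 1 = ((N-n).+1)%:R :> F by rewrite -natr1 natrB.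
  by rewrite pochnat subnK.
have f1 : ((N-n)`!)%:R != 0 :> F by rewrite pnatr_eq0 -lt0n fact_gt0.
have f2 : (n`!)%:R != 0 :> F by rewrite pnatr_eq0 -lt0n fact_gt0.
have A : poch (- N%:R) n = (-1)^+n * (N`!)%:R / ((N-n)`!)%:R :> F.
  by rewrite -hA mulrK // unitfE.
move: hb hc; rewrite Eb Ec !mulf_eq0 !negb_or => /andP[b1 b2] /andP[c1 c2].
rewrite /s refl_poch // refl_poch // A Eb Ec expr1n.
rewrite -signr_odd; case: (odd n); rewrite ?expr1 ?expr0; field.
all: try (repeat (apply/andP; split)); rewrite ?oppr_eq0 ?oner_eq0 //.
Qed.

Lemma s_sym n : odd N -> (n <= N)%N -> s (N - n) = - s n.
Proof.
move=> ho hn; rewrite /s subKn // -signr_odd oddB // ho -(signr_odd _ n).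
rewrite [_ * n`!%:R]mulrC [poch b (N-n) * _]mulrC [poch c (N-n) * _]mulrC.
case: (odd n) => /=; rewrite ?expr1 ?expr0 ?mul1r ?mulN1r ?opprK //.
Qed.

Lemma dixon : odd N ->
  F32_trunc (- N%:R) b c (1 - N%:R - b) (1 - N%:R - c) 1 N = 0.
Proof.
move=> ho.
have E : F32_trunc (- N%:R) b c (1 - N%:R - b) (1 - N%:R - c) 1 N = \sum_(i < N.+1) s i.
  by apply eq_bigr => i _; rewrite term // -ltnS.
rewrite E.
set S := \sum_(i < N.+1) s i.
have HS : S = - S.
  rewrite {1}/S (reindex_inj rev_ord_inj) /= /S -sumrN; apply eq_bigr => i _.
  by rewrite subSS s_sym // -ltnS.
have : S *+ 2 == 0 by rewrite mulr2n {1}HS addNr.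
by rewrite mulrn_eq0 /= => /eqP.
Qed.
End D.

Theorem mainTheorem12 (R : realType) (m k : nat) (gamma : R[i]) :
  (0 < m)%N -> (0 < k)%N ->
  (forall j : nat, gamma != - (j%:R)) ->
  (forall j : nat, - (2 * m)%:R - gamma != - (j%:R)) ->
  F32_trunc (- (2 * m + 1)%:R) (1 + k%:R) gamma
            (- (2 * m + 1 + k)%:R) (- (2 * m)%:R - gamma) 1 (2 * m + 1) = 0.
Proof.
move=> _ _ hg _.
have e1 : - (2 * m + 1 + k)%:R = 1 - (2 * m + 1)%:R - (1 + k%:R) :> R[i].
  rewrite !natrD; ring.
have e2 : - (2 * m)%:R - gamma = 1 - (2 * m + 1)%:R - gamma :> R[i].
  rewrite !natrD; ring.
rewrite e1 e2; apply: dixon.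
- apply/prodf_neq0 => i _.
  have -> : 1 + k%:R + (i : nat)%:R = (1 + k + i)%:R :> R[i] by rewrite !natrD.
  by rewrite pnatr_eq0 -addnA add1n.
- apply/prodf_neq0 => i _.
  by rewrite addr_eq0.
- by rewrite oddD oddM.
Qed.
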